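(* Let $\Bbbk$ be an algebraically closed field of characteristic zero, $G$ a finite abelian group, $u\in G$ of order $2$, $V$ a finite-dimensional $\Bbbk G$-module with $u\cdot v=-v$ for all $v\in V$, and $\mathcal{A}=\mathcal{A}(V,u,G)$. Let $(T,\beta,\alpha,\psi)$ be a compatible datum and $g\in G$. Then there is an isomorphism of left $\mathcal{A}$-comodules $\mathcal{L}(T,\beta,\alpha,\psi)\,\Box_{\mathcal{A}}\,\Bbbk_g\simeq\Bbbk_{\alpha(g)}$.
   Context: $\mathcal{A}(V,u,G)=\wedge(V)\#\Bbbk G$ is generated by $V$ and $G$ with relations of $G$, $vw+wv=0$, $gv=(g\cdot v)g$, and $\Delta(v)=v\otimes1+u\otimes v$, $\Delta(g)=g\otimes g$, $\varepsilon(v)=0$, $\varepsilon(g)=1$, $S(v)=-uv$, $S(g)=g^{-1}$. A compatible datum $(T,\beta,\alpha,\psi)$ consists of a group automorphism $\alpha$ of $G$ with $\alpha(u)=u$, a linear automorphism $T$ of $V$ with $T(g\cdot v)=\alpha(g)\cdot T(v)$, a symmetric $G$-invariant bilinear form $\beta$ on $V$, and $\psi\in H^2(G,\Bbbk^\times)$ (represented by a normalized cocycle). The algebra $\mathcal{L}(T,\beta,\alpha,\psi)$ is generated by the elements $(T(v),v)$, $v\in V$ (depending linearly on $v$) and elements $e_{(\alpha(g),g)}$, $g\in G$, with relations $e_{(\alpha(g),g)}e_{(\alpha(h),h)}=\psi(g,h)e_{(\alpha(gh),gh)}$, $e_{(\alpha(g),g)}(T(v),v)=(T(g\cdot v),g\cdot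 v)e_{(\alpha(g),g)}$, $(T(v),v)(T(w),w)+(T(w),w)(T(v),v)=\beta(v,w)1$; it is an $\mathcal{A}$-bicomodule algebra via left coaction $\lambda(T(v),v)=T(v)\otimes1+u\otimes(T(v),v)$, $\lambda(e_{(\alpha(g),g)})=\alpha(g)\otimes e_{(\alpha(g),g)}$ and right coaction $\rho(T(v),v)=e_{(u,u)}\otimes v+(T(v),v)\otimes1$, $\rho(e_{(\alpha(g),g)})=e_{(\alpha(g),g)}\otimes g$. For $h\in G$, $\Bbbk_h$ is the one-dimensional left $\mathcal{A}$-comodule spanned by $w_h$ with coaction $w_h\mapsto h\otimes w_h$. For a bicomodule $L$ and left comodule $X$, $L\Box_{\mathcal{A}}X=\{\sum x_i\otimes y_i\in L\otimes X:\sum\rho(x_i)\otimes y_i=\sum x_i\otimes\lambda_X(y_i)\}$, a left $\mathcal{A}$-comodule via the left coaction of $L$. *)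

(* Defs.v *)
From HB Require Import structures.
From mathcomp Require Import all_boot all_order all_algebra all_fingroup falgebra.
Set Implicit Arguments. Unset Strict Implicit. Unset Printing Implicit Defensive.
Import GRing.Theory.
Local Open Scope ring_scope.

Definition is_linear (k : fieldType) (U W : lmodType k) (f : U -> W) : Prop :=
  forall (a : k) x y, f (a *: x + y) = a *: f x + f y.

Definition alg_hom (k : fieldType) (B C : algType k) (f : B -> C) : Prop :=
  [/\ is_linear f, f 1 = 1 & forall x y, f (x * y) = f x * f y].

Definition presents (k : fieldType) (V : vectType k) (gT : finGroupType)
    (R : forall B : algType k, (V -> B) -> (gT -> B) -> Prop)
    (L : algType k) (t : V -> L) (e : gT -> L) : Prop :=
  R L t e /\
  forall (B : algType k) (t' : V -> B) (e' : gT -> B), R B t' e' ->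
    (exists f : L -> B, [/\ alg_hom f, forall v, f (t v) = t' v
                                    & forall g, f (e g) = e' g]) /\
    (forall f1 f2 : L -> B, alg_hom f1 -> alg_hom f2 ->
       (forall v, f1 (t v) = f2 (t v)) -> (forall g, f1 (e g) = f2 (e g)) ->
       forall x, f1 x = f2 x).

(* Defining relations of A(V,u,G) = /\(V) # kG : generated by V (linearly)
   and G, relations of G, vw + wv = 0, g v = (g.v) g. *)
Definition A_rels (k : fieldType) (V : vectType k) (gT : finGroupType)
    (gact : gT -> 'End(V)) (B : algType k) (x : V -> B) (y : gT -> B) : Prop :=
  [/\ is_linear x, y 1%g = 1, (forall g h, y (g * h)%g = y g * y h),
      (forall v w, x v * x w + x w * x v = 0)
    & (forall g v, y g * x v = x (gact g v) * y g)].

(* Defining relations of L(T,beta,alpha,psi): t v stands for (T(v),v) and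
   e g for e_(alpha(g),g). *)
Definition L_rels (k : fieldType) (V : vectType k) (gT : finGroupType)
    (gact : gT -> 'End(V)) (beta : V -> V -> k) (psi : gT -> gT -> k)
    (B : algType k) (t : V -> B) (e : gT -> B) : Prop :=
  [/\ is_linear t, e 1%g = 1,
      (forall g h, e g * e h = psi g h *: e (g * h)%g),
      (forall g v, e g * t v = t (gact g v) * e g)
    & (forall v w, t v * t w + t w * t v = (beta v w)%:A)].

Definition compatible_datum (k : fieldType) (V : vectType k) (gT : finGroupType)
    (gact : gT -> 'End(V)) (u : gT)
    (T : 'End(V)) (beta : V -> V -> k) (alpha : gT -> gT) (psi : gT -> gT -> k) : Prop :=
  [/\
      [/\ (forall g h, alpha (g * h)%g = (alpha g * alpha h)%g), bijective alpha
        & alpha u = u],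
      (bijective (T : V -> V) /\ (forall g v, T (gact g v) = gact (alpha g) (T v))),
      [/\ forall a x y w, beta (a *: x + y) w = a * beta x w + beta y w,
          forall v w, beta v w = beta w v
        & forall g v w, beta (gact g v) (gact g w) = beta v w]
    &
      [/\ forall g h, psi g h != 0,
          forall g h l, psi g h * psi (g * h)%g l = psi h l * psi g (h * l)%g
        & forall g, psi 1%g g = 1 /\ psi g 1%g = 1]].

(* Tensor products X (x) A and A (x) X, for A finite dimensional, modelled
   as coordinate functions on the basis vbasis fullv of A with values in X. *)
Definition tens (k : fieldType) (X : lmodType k) (A : falgType k) : Type :=
  {ffun 'I_(\dim (fullv : {vspace A})) -> X}.

(* tpure x a  represents  x (x) a  in X (x) A  (resp.  a (x) x  in A (x) X). *)
Definition tpure (k : fieldType) (X : lmodType k) (A : falgType k) (x : X) (a : A)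
  : tens X A := [ffun i => coord (vbasis fullv) i a *: x].

(* product of the tensor product algebra: (x(x)a)(y(x)b) = xy (x) ab *)
Definition tmul (k : fieldType) (X : algType k) (A : falgType k) (F G : tens X A)
  : tens X A :=
  [ffun l => \sum_(i < \dim (fullv : {vspace A})) \sum_(j < \dim (fullv : {vspace A}))
      coord (vbasis fullv) l (tnth (vbasis fullv) i * tnth (vbasis fullv) j)
        *: (F i * G j)].

Definition coaction_alg (k : fieldType) (L : algType k) (A : falgType k)
    (c : L -> tens L A) : Prop :=
  [/\ is_linear c, c 1 = tpure 1 1 & forall x y, c (x * y) = tmul (c x) (c y)].

(* L []_A k_g is identified with {x in L | rho x = x (x) g} via x |-> x (x) w_g
   (k_g is one-dimensional), with left coaction lambda (x) id.
   An isomorphism of left A-comodules  k_h -> L []_A k_g  is a linear map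
   c |-> c *: x0 which is bijective onto the cotensor product and sends the
   coaction w_h |-> h (x) w_h to the coaction of the cotensor product. *)
Definition cotensor_k_iso (k : fieldType) (L : algType k) (A : falgType k)
    (rho lam : L -> tens L A) (gA hA : A) : Prop :=
  exists x0 : L,
    [/\ x0 != 0,
        rho x0 = tpure x0 gA,
        (forall x, rho x = tpure x gA -> exists c : k, x = c *: x0)
      & lam x0 = tpure x0 hA].

(* Main.v *)
Require Import Defs.
From HB Require Import structures.
From mathcomp Require Import all_boot all_order all_algebra all_fingroup falgebra.
From Stdlib Require Import ClassicalEpsilon.
Set Implicit Arguments. Unset Strict Implicit. Unset Printing Implicit Defensive.
Import GRing.Theory.
Local Open Scope ring_scope.

Section Lin.
Variables (k : fieldType) (U W : lmodType k) (f : U -> W) (Hf : is_linear f).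
Lemma lin0 : f 0 = 0.
Proof. have H := Hf 1 0 0; rewrite !scale1r addr0 in H.
by apply: (addrI (f 0)); rewrite addr0 -H. Qed.
Lemma linD x y : f (x + y) = f x + f y.
Proof. by have := Hf 1 x y; rewrite !scale1r. Qed.
Lemma linZ a x : f (a *: x) = a *: f x.
Proof. by have := Hf a x 0; rewrite !addr0 lin0 addr0. Qed.
Lemma linN x : f (- x) = - f x.
Proof. by rewrite -scaleN1r linZ scaleN1r. Qed.
Lemma linB x y : f (x - y) = f x - f y.
Proof. by rewrite linD linN. Qed.
Lemma lin_sum (I : Type) (r : seq I) (P : pred I) (F : I -> U) :
  f (\sum_(i <- r | P i) F i) = \sum_(i <- r | P i) f (F i).
Proof.
elim: r => [|i r IH]; first by rewrite !big_nil lin0.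
by rewrite !big_cons; case: (P i); rewrite ?linD IH.
Qed.
End Lin.


Section Tens.
Variables (k : fieldType) (L : algType k) (A : falgType k).
Local Notation nA := (\dim (fullv : {vspace A})).
Local Notation bA i := (tnth (vbasis (fullv : {vspace A})) i).

Definition Pt m n (phi : A -> 'M[k]_(m, n)) i j (F : tens L A) : L :=
  \sum_(l < nA) phi (bA l) i j *: F l.

Lemma coord_exp m n (phi : A -> 'M[k]_(m, n)) (Hphi : is_linear phi) i j a :
  \sum_(l < nA) coord (vbasis fullv) l a * phi (bA l) i j = phi a i j.
Proof.
rewrite [in RHS](coord_vbasis (memvf a)) (lin_sum Hphi) summxE.
by apply: eq_bigr => l _; rewrite (linZ Hphi) mxE (tnth_nth 0).
Qed.

Lemma Pt_tpure m n (phi : A -> 'M[k]_(m, n)) (Hphi : is_linear phi) i j x a :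
  Pt phi i j (tpure x a) = phi a i j *: x.
Proof.
rewrite /Pt; under eq_bigr do rewrite ffunE scalerA.
by rewrite -scaler_suml; congr (_ *: _); rewrite -(coord_exp Hphi);
  apply: eq_bigr => l _; rewrite mulrC.
Qed.

Lemma Pt_lin m n (phi : A -> 'M[k]_(m, n)) i j : is_linear (fun F : tens L A => Pt phi i j F).
Proof.
move=> a F G; rewrite /Pt scaler_sumr -big_split /=.
by apply: eq_bigr => l _; rewrite !ffunE scalerDr !scalerA mulrC.
Qed.

Lemma Pt_tmul m (phi : A -> 'M[k]_m.+1) (Hphi : is_linear phi)
  (HM : forall x y, phi (x * y) = phi x * phi y) i j (F G : tens L A) :
  Pt phi i j (tmul F G) = \sum_c Pt phi i c F * Pt phi c j G.
Proof.
rewrite /Pt /tmul.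
transitivity (\sum_(a < nA) \sum_(b < nA) (phi (bA a * bA b) i j *: (F a * G b))).
  under eq_bigr do rewrite ffunE.
  under eq_bigr do rewrite scaler_sumr.
  rewrite exchange_big /=; apply: eq_bigr => a _.
  under eq_bigr do rewrite scaler_sumr.
  rewrite exchange_big /=; apply: eq_bigr => b _.
  under eq_bigr do rewrite scalerA.
  rewrite -scaler_suml; congr (_ *: _); rewrite -(coord_exp Hphi); apply: eq_bigr => l _; exact: mulrC.
symmetry.
under eq_bigr do rewrite mulr_suml.
under eq_bigr do (under eq_bigr do rewrite mulr_sumr).
rewrite exchange_big /=; apply: eq_bigr => a _.
rewrite exchange_big /=; apply: eq_bigr => b _.
rewrite HM mxE scaler_suml; apply: eq_bigr => c _.
by rewrite -scalerAl -scalerAr scalerA.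
Qed.
End Tens.


Section SubAlgT.
Variables (k : fieldType) (L : algType k) (S : pred L)
  (HS : GRing.subsemialg_closed S).
Record subT0 := SubT { sval : L; _ : S sval }.
Definition subT : Type := let _ := HS in subT0.
HB.instance Definition _ := [isSub of subT for sval].
HB.instance Definition _ := [Choice of subT by <:].
HB.instance Definition _ := GRing.SubChoice_isSubAlgebra.Build k L S subT HS.
Lemma val_scale (a : k) (x : subT) : val (a *: x) = a *: val x.
Proof. first [exact: linearZ | by rewrite /= SubK | exact: scalarZ]. Qed.
Lemma val_alg : [/\ forall (a : k) (x y : subT), val (a *: x + y) = a *: val x + val y,
  val (1 : subT) = 1 & forall x y : subT, val (x * y) = val x * val y].
Proof. split.
- by move=> a x y; rewrite raddfD /=; congr (_ + _); apply: val_scale.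
- by rewrite rmorph1.
- by move=> x y; rewrite rmorphM.
Qed.
End SubAlgT.

Definition asb (P : Prop) : bool := if excluded_middle_informative P then true else false.
Lemma asbP (P : Prop) : reflect P (asb P).
Proof. by rewrite /asb; case: excluded_middle_informative => h; constructor. Qed.

Lemma L_ind (k : fieldType) (V : vectType k) (gT : finGroupType)
  (gact : gT -> 'End(V)) beta psi (L : algType k) t e
  (HL : presents (L_rels gact beta psi) t e) (P : L -> Prop)
  (P1 : P 1) (P0 : P 0) (PD : forall x y, P x -> P y -> P (x + y))
  (PZ : forall a x, P x -> P (a *: x)) (PM : forall x y, P x -> P y -> P (x * y))
  (Pt : forall v, P (t v)) (Pe : forall g, P (e g)) : forall x, P x.
Proof.
pose S := fun x => asb (P x).
have HS : GRing.subsemialg_closed S.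
  split; first exact/asbP.
  - split; first exact/asbP.
    by move=> x y /asbP Hx /asbP Hy; apply/asbP; apply: PD.
  - by move=> a x /asbP Hx; apply/asbP; apply: PZ.
  - by move=> x y /asbP Hx /asbP Hy; apply/asbP; apply: PM.
have St v : S (t v) by apply/asbP.
have Se g : S (e g) by apply/asbP.
pose ST := @subT _ _ S HS.
pose t' v : ST := @SubT _ _ S (t v) (St v).
pose e' g : ST := @SubT _ _ S (e g) (Se g).
have [vZ v1 vM] := val_alg HS.
have vA a : val (a%:A : ST) = a%:A.
  by rewrite val_scale v1.
case: HL => [[tlinL e1L eeL etL ttL] Huniv].
have HR : L_rels gact beta psi t' e'.
  split.
  - by move=> a v w; apply: val_inj; rewrite vZ /= tlinL.
  - by apply: val_inj; rewrite v1 /= e1L.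
  - by move=> g h; apply: val_inj; rewrite vM val_scale /= eeL.
  - by move=> g v; apply: val_inj; rewrite !vM /= etL.
  - move=> v w; apply: val_inj.
    have vD (x y : ST) : val (x + y) = val x + val y by have := vZ 1 x y; rewrite !scale1r.
    by rewrite vD !vM vA /= ttL.
have [[f [[flin f1 fM] ft fe]] _] := Huniv _ _ _ HR.
have [_ Hu] := Huniv _ _ _ (And5 tlinL e1L eeL etL ttL).
have Hid : alg_hom (fun x : L => x) by [].
have Hvf : alg_hom (fun x => val (f x)).
  split.
  - by move=> a x y; rewrite flin vZ.
  - by rewrite f1 v1.
  - by move=> x y; rewrite fM vM.
move=> x; have -> : x = val (f x).
  apply: (Hu _ _ Hid Hvf) => [v|g]; by rewrite ?ft ?fe.
by case: (f x) => y /= /asbP.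
Qed.


Section Phi1.
Variables (k : fieldType) (V : vectType k) (gT : finGroupType) (gact : gT -> 'End(V)).
Hypothesis Hact1 : gact 1%g = \1%VF.
Hypothesis HactM : forall g h, gact (g * h)%g = (gact g \o gact h)%VF.
Local Notation n := (\dim (fullv : {vspace V})).
Local Notation bV := (vbasis (fullv : {vspace V})).

Definition cv (v : V) : 'cV[k]_n := \col_i coord bV i v.
Definition Mg (g : gT) : 'M[k]_n := \matrix_(i, j) coord bV i (gact g (tnth bV j)).

Lemma cv_lin : is_linear cv.
Proof. by move=> a v w; apply/matrixP => i j; rewrite !mxE linearP. Qed.

Lemma Mg_cv g v : Mg g *m cv v = cv (gact g v).
Proof.
apply/matrixP => i j; rewrite !mxE.
rewrite [in RHS](coord_vbasis (memvf v)) !linear_sum /=.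
apply: eq_bigr => l _; rewrite !mxE !linearZ /= (tnth_nth 0).
by rewrite mulrC.
Qed.

Lemma MgM g h : Mg (g * h)%g = Mg g *m Mg h.
Proof.
apply/matrixP => i j.
have := congr1 (fun M : 'M[k]_(n, 1) => M i ord0) (Mg_cv g (gact h (tnth bV j))).
rewrite [in RHS]mxE => H.
rewrite [LHS]mxE HactM comp_lfunE -H !mxE.
by apply: eq_bigr => l _; rewrite !mxE.
Qed.

Lemma Mg1 : Mg 1%g = 1%:M.
Proof.
apply/matrixP => i j; rewrite !mxE Hact1 id_lfunE (tnth_nth 0).
by rewrite coord_free ?(basis_free (vbasisP _)) // eq_sym.
Qed.

Definition phiV (v : V) : 'M[k]_(1 + n) := block_mx 0 0 (cv v) 0.
Definition phiG (g : gT) : 'M[k]_(1 + n) := block_mx 1%:M 0 0 (Mg g).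

Lemma mulr_block (a : 'M[k]_1) (b : 'M[k]_(1, n)) (c : 'M[k]_(n, 1)) (d : 'M[k]_n)
  (a' : 'M[k]_1) (b' : 'M[k]_(1, n)) (c' : 'M[k]_(n, 1)) (d' : 'M[k]_n) :
  (block_mx a b c d : 'M[k]_(1 + n)) * block_mx a' b' c' d' =
  block_mx (a *m a' + b *m c') (a *m b' + b *m d') (c *m a' + d *m c') (c *m b' + d *m d').
Proof. exact: mulmx_block. Qed.

Lemma phi_rels : A_rels gact phiV phiG.
Proof.
split.
- move=> a v w; rewrite /phiV cv_lin; have := scale_block_mx a (0 : 'M[k]_1) (0 : 'M[k]_(1, n)) (cv v) (0 : 'M[k]_n); move=> ->; rewrite (@add_block_mx _ 1 n 1 n) /=.
  by rewrite !scaler0 !addr0.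
- by rewrite /phiG Mg1 -scalar_mx_block.
- move=> g h; rewrite /phiG MgM; apply: esym; rewrite mulr_block.
  by rewrite !mulmx0 !mul0mx !addr0 !add0r mul1mx.
- move=> v w; rewrite /phiV !mulr_block !mulmx0 !mul0mx !addr0.
  by rewrite (@add_block_mx _ 1 n 1 n) !addr0 block_mx0.
- move=> g v; rewrite /phiG /phiV !mulr_block !mulmx0 !mul0mx !addr0 !add0r.
  by rewrite Mg_cv mulmx1.
Qed.
End Phi1.

Section Phi2.
Variables (k : fieldType) (V : vectType k) (gT : finGroupType) (gact : gT -> 'End(V)).
Local Notation N := (#|gT|.-1).
Lemma cardNE : #|gT| = N.+1.
Proof. by rewrite prednK // (cardD1 1%g) inE. Qed.
Definition gi (i : 'I_N.+1) : gT := enum_val (cast_ord (esym cardNE) i).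
Definition ri (h : gT) : 'I_N.+1 := cast_ord cardNE (enum_rank h).
Lemma giK : cancel ri gi.
Proof. by move=> h; rewrite /gi /ri cast_ordK enum_rankK. Qed.
Lemma riK : cancel gi ri.
Proof. by move=> i; rewrite /gi /ri enum_valK cast_ordKV. Qed.

Definition Rg (g : gT) : 'M[k]_N.+1 := \matrix_(i, j) (gi i == g * gi j)%g%:R.
Definition phiV0 (v : V) : 'M[k]_N.+1 := 0.

Lemma phi2_rels : A_rels gact phiV0 Rg.
Proof.
split.
- by move=> a v w; rewrite /phiV0 scaler0 addr0.
- apply/matrixP => i j; rewrite !mxE mul1g.
  by rewrite (inj_eq (can_inj riK)).
- move=> g h; apply/matrixP => i j; rewrite [_ * _]/(_ *m _) !mxE.
  rewrite (bigD1 (ri (h * gi j)%g)) //= big1 ?addr0.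
    by rewrite !mxE giK eqxx mulr1 mulgA.
  move=> c Hc; rewrite !mxE.
  case: (eqVneq (gi c) (h * gi j)%g) => [Hcj|Hne]; last by rewrite mulr0.
  by move: Hc; rewrite -Hcj riK eqxx.
- by move=> v w; rewrite /phiV0 !mulr0 addr0.
- by move=> g v; rewrite /phiV0 mulr0 mul0r.
Qed.
End Phi2.


Lemma zm1 (W : zmodType) (a b Y B : W) : a + Y - B - (b + a) = Y - b - B.
Proof. by rewrite [b + a]addrC opprD !addrA (addrAC (a + Y)) (addrC a Y) addrK addrAC. Qed.
Lemma zm2 (R : ringType) (W : lmodType R) (a b : R) (w Y : W) : a *: w - Y = (a - b) *: w - (Y - b *: w).
Proof. by rewrite scalerBl opprB addrA subrK. Qed.

Section Main.
Variables (k : fieldType) (gT : finGroupType) (u : gT) (V : vectType k)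
  (gact : gT -> 'End(V)) (A : falgType k) (iV : V -> A) (iG : gT -> A)
  (beta : V -> V -> k) (psi : gT -> gT -> k) (L : algType k) (t : V -> L) (e : gT -> L)
  (rho : L -> tens L A).
Hypothesis Hact1 : gact 1%g = \1%VF.
Hypothesis HactM : forall g h, gact (g * h)%g = (gact g \o gact h)%VF.
Hypothesis Hactu : forall v, gact u v = - v.
Hypothesis Huu : (u * u = 1)%g.
Hypothesis Hchar : [pchar k] =i pred0.
Hypothesis Hpsi : forall g h, psi g h != 0.
Hypothesis HL : presents (L_rels gact beta psi) t e.
Hypothesis Hrho : coaction_alg rho.
Hypothesis Hrho_t : forall v, rho (t v) = tpure (e u) (iV v) + tpure (t v) 1.
Hypothesis Hrho_e : forall g, rho (e g) = tpure (e g) (iG g).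
Local Notation n := (\dim (fullv : {vspace V})).
Local Notation bV := (vbasis (fullv : {vspace V})).
Variable phi : A -> 'M[k]_(1 + n).
Hypothesis phi_lin : is_linear phi.
Hypothesis phi1 : phi 1 = 1.
Hypothesis phiM : forall x y, phi (x * y) = phi x * phi y.
Hypothesis phi_V : forall v, phi (iV v) = phiV v.
Hypothesis phi_G : forall g, phi (iG g) = phiG gact g.

Lemma tlinL : is_linear t. Proof. by case: HL => [[]]. Qed.
Lemma e1L : e 1%g = 1. Proof. by case: HL => [[]]. Qed.
Lemma eeL g h : e g * e h = psi g h *: e (g * h)%g. Proof. by case: HL => [[]]. Qed.
Lemma etL g v : e g * t v = t (gact g v) * e g. Proof. by case: HL => [[]]. Qed.
Lemma ttL v w : t v * t w + t w * t v = (beta v w)%:A. Proof. by case: HL => [[]]. Qed.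

Definition P i j x := Pt phi i j (rho x).
Lemma P_lin i j : is_linear (P i j).
Proof.
case: Hrho => rlin _ _ => a x y.
by rewrite /P rlin (Pt_lin phi i j).
Qed.

Lemma PM i j x y : P i j (x * y) = \sum_c P i c x * P c j y.
Proof. case: Hrho => _ _ rM; by rewrite /P rM (Pt_tmul phi_lin phiM). Qed.

Lemma P_t i j v : P i j (t v) = phiV v i j *: e u + (1%:M : 'M[k]_(1 + n)) i j *: t v.
Proof.
rewrite /P Hrho_t (linD (Pt_lin phi i j)) !(Pt_tpure phi_lin) phi_V phi1 //.
Qed.

Lemma P_e i j h : P i j (e h) = phiG gact h i j *: e h.
Proof. by rewrite /P Hrho_e (Pt_tpure phi_lin) phi_G. Qed.

Local Notation i0 := (lshift n (ord0 : 'I_1)).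
Local Notation rj j := (rshift 1 j).
Definition E00 x := P i0 i0 x.
Definition D j x := P (rj j) i0 x.

Lemma sum1n (R : nmodType) (F : 'I_(1 + n) -> R) : \sum_c F c = F i0 + \sum_(j < n) F (rj j).
Proof. by rewrite big_split_ord big_ord1. Qed.

Lemma E_t v y : E00 (t v * y) = t v * E00 y.
Proof.
rewrite /E00 PM sum1n big1 ?addr0.
  by rewrite P_t /phiV block_mxEul mxE scale0r add0r mxE eqxx scale1r.
move=> j _; rewrite P_t /phiV block_mxEur mxE scale0r add0r mxE.
by rewrite (_ : (i0 == rj j) = false) ?scale0r ?mul0r //; apply/negbTE; rewrite eq_lrshift.
Qed.

Lemma D_t j v y : D j (t v * y) = coord bV j v *: (e u * E00 y) + t v * D j y.
Proof.
rewrite /D /E00 PM sum1n; congr (_ + _).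
  by rewrite P_t /phiV block_mxEdl mxE mxE (_ : (rj j == i0) = false) ?scale0r ?addr0 -?scalerAl // ; apply/negbTE; rewrite eq_rlshift.
rewrite (bigD1 j) //= big1 ?addr0.
  by rewrite P_t /phiV block_mxEdr mxE scale0r add0r mxE eqxx scale1r.
move=> c Hc; rewrite P_t /phiV block_mxEdr mxE scale0r add0r mxE.
by rewrite (_ : (rj j == rj c) = false) ?scale0r ?mul0r //; apply/negbTE; rewrite eq_rshift eq_sym.
Qed.

Lemma E_e h : E00 (e h) = e h.
Proof. by rewrite /E00 P_e /phiG block_mxEul mxE eqxx scale1r. Qed.
Lemma D_e j h : D j (e h) = 0.
Proof. by rewrite /D P_e /phiG block_mxEdl mxE scale0r. Qed.

Definition tprod (s : seq V) : L := foldr (fun v y => t v * y) 1 s.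
Definition wd (s : seq V) (h : gT) : L := tprod s * e h.

Lemma tprod_cons v s : tprod (v :: s) = t v * tprod s. Proof. by []. Qed.
Lemma tprod_nil : tprod [::] = 1. Proof. by []. Qed.

Lemma tprod_cat s1 s2 : tprod (s1 ++ s2) = tprod s1 * tprod s2.
Proof. elim: s1 => [|v s IH]; first by rewrite cat0s tprod_nil mul1r.
by rewrite cat_cons !tprod_cons IH mulrA. Qed.

Lemma e_tprod g s : e g * tprod s = tprod (map (gact g) s) * e g.
Proof.
elim: s => [|v s IH]; first by rewrite tprod_nil mulr1 mul1r.
by rewrite map_cons !tprod_cons mulrA etL -mulrA IH mulrA.
Qed.

Lemma wd_cons v s h : wd (v :: s) h = t v * wd s h.
Proof. by rewrite /wd tprod_cons mulrA. Qed.

Lemma wdM s h s' h' : wd s h * wd s' h' = psi h h' *: wd (s ++ map (gact h) s') (h * h')%g.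
Proof.
by rewrite /wd -mulrA (mulrA (e h)) e_tprod -mulrA eeL -!scalerAr mulrA -tprod_cat.
Qed.

Lemma E_wd s h : E00 (wd s h) = wd s h.
Proof.
elim: s => [|v s IH]; first by rewrite /wd tprod_nil mul1r E_e.
by rewrite wd_cons E_t IH.
Qed.

Definition U m (x : L) := exists r : seq (k * (seq V * gT)),
  all (fun p => size p.2.1 <= m)%N r /\ x = \sum_(p <- r) p.1 *: wd p.2.1 p.2.2.

Lemma U0 m : U m 0.
Proof. by exists [::]; rewrite big_nil. Qed.

Lemma UD m x y : U m x -> U m y -> U m (x + y).
Proof.
move=> [r [Hr ->]] [r' [Hr' ->]]; exists (r ++ r'); split.
  by rewrite all_cat Hr Hr'.
by rewrite big_cat.
Qed.

Lemma UZ m a x : U m x -> U m (a *: x).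
Proof.
move=> [r [Hr ->]]; exists [seq (a * p.1, p.2) | p <- r]; split.
  by rewrite all_map.
by rewrite big_map scaler_sumr; apply: eq_bigr => p _; rewrite scalerA.
Qed.

Lemma UN m x : U m x -> U m (- x).
Proof. by move=> H; rewrite -scaleN1r; apply: UZ. Qed.

Lemma Umono m m' x : (m <= m')%N -> U m x -> U m' x.
Proof.
move=> Hm [r [Hr ->]]; exists r; split => //.
by apply: sub_all Hr => p /= Hp; apply: leq_trans Hm.
Qed.

Lemma UM m m' x y : U m x -> U m' y -> U (m + m') (x * y).
Proof.
move=> [r [Hr ->]] [r' [Hr' ->]].
exists [seq (p.1 * q.1 * psi p.2.2 q.2.2, (p.2.1 ++ map (gact p.2.2) q.2.1, (p.2.2 * q.2.2)%g)) | p <- r, q <- r']; split.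
  apply/allP => z /allpairsPdep [p [q [Hp Hq ->]]] /=.
  rewrite size_cat size_map leq_add //.
    by move/allP: Hr => /(_ _ Hp).
  by move/allP: Hr' => /(_ _ Hq).
rewrite big_allpairs_dep mulr_suml; apply: eq_bigr => p _.
rewrite mulr_sumr; apply: eq_bigr => q _ /=.
by rewrite -scalerAl -scalerAr wdM !scalerA.
Qed.

Lemma Uwd s h : U (size s) (wd s h).
Proof. by exists [:: (1, (s, h))]; rewrite /= leqnn big_seq1 scale1r. Qed.

Lemma Ut v : U 1 (t v).
Proof. by have := Uwd [:: v] 1%g; rewrite /wd tprod_cons tprod_nil e1L !mulr1. Qed.
Lemma Ue g : U 0 (e g).
Proof. by have := Uwd [::] g; rewrite /wd tprod_nil mul1r. Qed.

Lemma span_words x : exists m, U m x.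
Proof.
apply: (L_ind HL (P := fun x => exists m, U m x)).
- by exists 0%N; rewrite -e1L; apply: Ue.
- by exists 0%N; apply: U0.
- move=> x1 x2 [m1 H1] [m2 H2]; exists (maxn m1 m2); apply: UD.
    by apply: Umono H1; rewrite leq_maxl.
  by apply: Umono H2; rewrite leq_maxr.
- by move=> a x1 [m1 H1]; exists m1; apply: UZ.
- by move=> x1 x2 [m1 H1] [m2 H2]; exists (m1 + m2)%N; apply: UM.
- by move=> v; exists 1%N; apply: Ut.
- by move=> g; exists 0%N; apply: Ue.
Qed.

Lemma U_sum m (I : eqType) (r : seq I) (F : I -> L) :
  (forall i, i \in r -> U m (F i)) -> U m (\sum_(i <- r) F i).
Proof.
elim: r => [|i r IH] H; first by rewrite big_nil; apply: U0.
rewrite big_cons; apply: UD; first by apply: H; rewrite mem_head.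
by apply: IH => j Hj; apply: H; rewrite in_cons Hj orbT.
Qed.

Lemma U_sumo m p (F : 'I_p -> L) :
  (forall i, U m (F i)) -> U m (\sum_(i < p) F i).
Proof. by move=> H; apply: U_sum. Qed.

Lemma D_lin j : is_linear (D j). Proof. exact: P_lin. Qed.

Lemma D_wd j s h : U (size s) (D j (wd s h)).
Proof.
elim: s => [|v s IH].
  by rewrite /wd tprod_nil mul1r D_e; apply: U0.
rewrite wd_cons D_t E_wd /=; apply: UD.
  apply: UZ; rewrite -(add0n (size s)); apply: Umono (UM (Ue u) (Uwd s h)).
  by rewrite add0n leqW.
by rewrite -add1n; apply: UM (Ut v) IH.
Qed.

Lemma D_U j m x : U m x -> U m (D j x).
Proof.
move=> [r [Hr ->]]; rewrite (lin_sum (D_lin j)); apply: U_sum => p Hp.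
rewrite (linZ (D_lin j)); apply: UZ; apply: Umono (D_wd _ _ _).
by move/allP: Hr => /(_ _ Hp).
Qed.

Definition E' x := \sum_(j < n) t (tnth bV j) * (e u * D j x).

Lemma E'_lin : is_linear E'.
Proof.
move=> a x y; rewrite /E' scaler_sumr -big_split; apply: eq_bigr => j _ /=.
by rewrite (D_lin j) mulrDr mulrDr -scalerAr -scalerAr.
Qed.

Lemma eu_eu z : e u * (e u * z) = psi u u *: z.
Proof. by rewrite mulrA eeL Huu e1L -scalerAl mul1r. Qed.

Lemma eu_t v z : e u * (t v * z) = - (t v * (e u * z)).
Proof. by rewrite mulrA etL Hactu (linN tlinL) !mulNr mulrA. Qed.

Lemma sum_coord_t v : \sum_(j < n) coord bV j v *: t (tnth bV j) = t v.
Proof.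
rewrite [in RHS](coord_vbasis (memvf v)) (lin_sum tlinL); apply: eq_bigr => j _.
by rewrite (linZ tlinL) (tnth_nth 0).
Qed.

Lemma E_tstep v y : E' (t v * y) = psi u u *: (t v * E00 y) + t v * E' y
   - \sum_(j < n) beta (tnth bV j) v *: (e u * D j y).
Proof.
rewrite /E'.
transitivity (\sum_(j < n) (coord bV j v *: t (tnth bV j) * (psi u u *: E00 y)
   + (t v * (t (tnth bV j) * (e u * D j y)) - beta (tnth bV j) v *: (e u * D j y)))).
  apply: eq_bigr => j _; rewrite D_t mulrDr mulrDr -scalerAr eu_eu; congr (_ + _).
    by rewrite -scalerAr scalerAl.
  rewrite eu_t mulrN (mulrA (t (tnth bV j)) (t v)).
  have -> : t (tnth bV j) * t v = (beta (tnth bV j) v)%:A - t v * t (tnth bV j).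
    by rewrite -(ttL (tnth bV j) v) addrK.
  by rewrite mulrBl mulr_algl opprB -mulrA.
rewrite big_split /= -mulr_suml sum_coord_t big_split /= -mulr_sumr sumrN.
by rewrite -scalerAr addrA.
Qed.

Definition Vm m x := if m is m'.+1 then U m' x else x = 0.

Lemma Euler s h : Vm (size s) (E' (wd s h) - (psi u u * (size s)%:R) *: wd s h).
Proof.
elim: s => [|v s IH].
  rewrite /= mulr0 scale0r subr0 /E' big1 // => j _.
  by rewrite /wd tprod_nil mul1r D_e !mulr0.
rewrite wd_cons E_tstep E_wd /= -addn1 natrD mulrDr mulr1 scalerDl zm1.
rewrite scalerAr -mulrBr; apply: UD; last first.
  apply: UN; apply: U_sumo => j; apply: UZ.
  by rewrite -(add0n (size s)); apply: UM (Ue u) (D_wd j s h).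
move: IH; case: (size s) => [|m] /= IH.
  by rewrite IH mulr0; apply: U0.
by rewrite -add1n; apply: UM (Ut v) IH.
Qed.

Lemma E'0 x : (forall j, D j x = 0) -> E' x = 0.
Proof. by move=> H; rewrite /E' big1 // => j _; rewrite H !mulr0. Qed.

Lemma cm_neq0 m : psi u u * (m.+1)%:R != 0.
Proof.
rewrite mulf_neq0 ?Hpsi //.
by move/(pcharf0P k): Hchar => ->.
Qed.

Lemma descend m x : U m x -> (forall j, D j x = 0) -> U 0 x.
Proof.
elim: m x => [//|m IH] x Hx HD; have HE := E'0 HD; apply: IH HD.
set cm := psi u u * (m.+1)%:R.
suff H : U m (cm *: x - E' x).
  rewrite HE subr0 in H.
  by rewrite -[x](scalerK (cm_neq0 m)); apply: UZ.
case: Hx => r [Hr Hx].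
have -> : cm *: x - E' x = \sum_(p <- r) p.1 *: (cm *: wd p.2.1 p.2.2 - E' (wd p.2.1 p.2.2)).
  rewrite Hx (lin_sum E'_lin) scaler_sumr -sumrB; apply: eq_bigr => p _.
  by rewrite (linZ E'_lin) scalerBr !scalerA mulrC.
apply: U_sum => p Hp; apply: UZ.
have Hs : (size p.2.1 <= m.+1)%N by move/allP: Hr => /(_ _ Hp).
rewrite (zm2 _ (psi u u * (size p.2.1)%:R)).
apply: UD; last first.
  apply: UN; have := Euler p.2.1 p.2.2.
  case: (size p.2.1) Hs => [|s'] /= Hs'.
    by move=> ->; apply: U0.
  by apply: Umono.
case: (eqVneq (size p.2.1) m.+1) => [->|Hne].
  by rewrite subrr scale0r; apply: U0.
apply: UZ; apply: Umono (Uwd _ _).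
by rewrite -ltnS ltn_neqAle Hne Hs.
Qed.

Variable phi2 : A -> 'M[k]_(#|gT|.-1.+1).
Hypothesis phi2_lin : is_linear phi2.
Hypothesis phi2_G : forall g, phi2 (iG g) = @Rg k gT g.

Lemma coinv g x : rho x = tpure x (iG g) -> exists c : k, x = c *: e g.
Proof.
move=> Hx.
have HD j : D j x = 0.
  by rewrite /D /P Hx (Pt_tpure phi_lin) phi_G /phiG block_mxEdl mxE scale0r.
have [m Hm] := span_words x.
have [r [Hr Hxr]] := descend Hm HD.
pose Q z := Pt phi2 (ri g) (ri 1%g) (rho z).
have Qlin : is_linear Q.
  by case: Hrho => rlin _ _ a y z; rewrite /Q rlin (Pt_lin phi2).
have Qx : Q x = x.
  by rewrite /Q Hx (Pt_tpure phi2_lin) phi2_G mxE !giK mulg1 eqxx scale1r.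
exists (\sum_(p <- r) p.1 * (g == p.2.2)%:R).
rewrite -{1}Qx Hxr (lin_sum Qlin) scaler_suml !big_seq; apply: eq_bigr => p Hp.
have Hs : (size p.2.1 <= 0)%N by move/allP: Hr => /(_ _ Hp).
rewrite (linZ Qlin) -scalerA; congr (_ *: _).
case: p Hp Hs => a [s h] /= _; case: s => // _.
rewrite /wd tprod_nil mul1r /Q Hrho_e (Pt_tpure phi2_lin) phi2_G mxE !giK mulg1.
by case: eqP => [->|_]; rewrite ?scale1r ?scale0r.
Qed.
End Main.


Unset Implicit Arguments.
Theorem lemma4p14
  (k : closedFieldType) (Hchar : [pchar k] =i pred0)
  (gT : finGroupType) (Hab : abelian [set: gT])
  (u : gT) (Hu : #[u]%g = 2%N)
  (V : vectType k) (gact : gT -> 'End(V))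
  (Hact1 : gact 1%g = \1%VF)
  (HactM : forall g h, gact (g * h)%g = (gact g \o gact h)%VF)
  (Hactu : forall v, gact u v = - v)
  (A : falgType k) (iV : V -> A) (iG : gT -> A)
  (HA : presents (A_rels gact) iV iG)
  (T : 'End(V)) (beta : V -> V -> k) (alpha : gT -> gT) (psi : gT -> gT -> k)
  (Hdatum : compatible_datum gact u T beta alpha psi)
  (L : algType k) (t : V -> L) (e : gT -> L)
  (HL : presents (L_rels gact beta psi) t e)
  (lam rho : L -> tens L A)
  (Hlam : coaction_alg lam) (Hrho : coaction_alg rho)
  (Hlam_t : forall v, lam (t v) = tpure 1 (iV (T v)) + tpure (t v) (iG u))
  (Hlam_e : forall g, lam (e g) = tpure (e g) (iG (alpha g)))
  (Hrho_t : forall v, rho (t v) = tpure (e u) (iV v) + tpure (t v) 1)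
  (Hrho_e : forall g, rho (e g) = tpure (e g) (iG g))
  (g : gT) :
  cotensor_k_iso rho lam (iG g) (iG (alpha g)).
Proof.
have Hpsi : forall g h, psi g h != 0 by case: Hdatum => _ _ _ [].
have Huu : (u * u = 1)%g by rewrite -(expg_order u) Hu expgS expg1.
case: HA => _ HAu.
have [[phi [[phil phi1 phiM] phV phG]] _] := HAu _ _ _ (phi_rels Hact1 HactM).
have [[phi2 [[phi2l _ _] _ ph2G]] _] := HAu _ _ _ (phi2_rels gact).
exists (e g); split.
- apply/negP => /eqP Heg.
  have := eeL HL g g^-1; rewrite Heg mul0r mulgV (e1L HL) => /esym/eqP.
  rewrite scaler_eq0 (negbTE (Hpsi _ _)) /= => /eqP H10.
  by have := oner_neq0 L; rewrite H10 eqxx.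
- exact: Hrho_e.
- move=> x Hx.
  exact: (coinv Hactu Huu Hchar Hpsi HL Hrho Hrho_t Hrho_e phil phi1 phiM phV phG phi2l ph2G Hx).
- exact: Hlam_e.
Qed.
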